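(* Let $M\ge1$. There exist two languages $L_1,L_2$ and an enumeration $x_{1:\infty}$ which, for each $K\in\{L_1,L_2\}$, is an $M$-bounded displacement enumeration with respect to $K$ and an enumeration of $K$ with $o(1)$-noise, such that any element-based generator that generates in the limit from the target $K$ (for either possible target $K\in\{L_1,L_2\}$) on this enumeration achieves element-based upper density at most $1/M$ (for some choice of the target).
   Context: The universe is $U=\mathbb{N}$ with its natural order; a language is an infinite subset of $U$ with canonical enumeration $\ell_1<\ell_2<\cdots$. For $A,B\subseteq\mathbb{N}$ with $B=\{b_1<b_2<\cdots\}$, $\mu_{\rm up}(A,B)=\limsup_n\frac1n|A\cap\{b_1,\dots,b_n\}|$. For $x\in U$, $\sigma(x,L)=j$ if $x=\ell_j$ and $0$ if $x\notin L$; $x_{1:\infty}$ is an $M$-bounded displacement enumeration with respect to $L$ if there is $n^\star$ with $\sigma(x_n,L)\le Mn$ for all $n\ge n^\star$. An enumeration of $L$ with $o(1)$-noise is a sequence of distinct elements listing every element of $L$ with $\frac1n|\{t\le n:x_t\notin L\}|\to0$. An element-based generator outputs, from $x_1,\dots,x_n$ and knowledge of $\{L_1,L_2\}$ (not $K$), an element $w_n\notin\{x_1,\dots,x_n,w_1,\dots,w_{n-1}\}$; it generates in the limit from $K$ if $w_n\in K$ for all large $n$; its element-based upper density is $\mu_{\rm up}(\{w_1,w_2,\dots\},K)$. *)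

(* Defs.v *)
From Stdlib Require Import Reals List Arith ClassicalDescription.
From Coquelicot Require Import Coquelicot.
Import ListNotations.
Open Scope R_scope.

Definition ind (P : Prop) : nat :=
  if excluded_middle_informative P then 1%nat else 0%nat.

Definition language (L : nat -> Prop) : Prop :=
  forall N : nat, exists m : nat, (N <= m)%nat /\ L m.

(* rank L y = |{ z <= y : z in L }|; if y in L, y = ell_{rank L y}. *)
Definition rank (L : nat -> Prop) (y : nat) : nat :=
  list_sum (map (fun z => ind (L z)) (seq 0 (S y))).

Definition sigma (y : nat) (L : nat -> Prop) : nat :=
  if excluded_middle_informative (L y) then rank L y else 0%nat.

(* Enumerations are 0-indexed: x t stands for x_{t+1}. *)

Definition bounded_displacement (M : R) (x : nat -> nat) (L : nat -> Prop) : Prop :=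
  exists nstar : nat, forall n : nat, (nstar <= n)%nat -> (1 <= n)%nat ->
    INR (sigma (x (n - 1)%nat) L) <= M * INR n.

Definition noise_count (x : nat -> nat) (L : nat -> Prop) (n : nat) : nat :=
  list_sum (map (fun t => ind (~ L (x t))) (seq 0 n)).

Definition noisy_enumeration (x : nat -> nat) (L : nat -> Prop) : Prop :=
  (forall s t : nat, x s = x t -> s = t) /\
  (forall y : nat, L y -> exists t : nat, x t = y) /\
  is_lim_seq (fun n => INR (noise_count x L n) / INR n) 0.

Definition inter_count (A : nat -> Prop) (L : nat -> Prop) (n : nat) : nat :=
  list_sum (map (fun j => ind (exists y, L y /\ rank L y = j /\ A y)) (seq 1 n)).

Definition mu_up (A : nat -> Prop) (B : nat -> Prop) : Rbar :=
  LimSup_seq (fun n => INR (inter_count A B n) / INR n).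

(* An element-based generator: a map from the finite input prefix
   [x_1; ...; x_n] to an output w_n. *)
Definition generator := list nat -> nat.

Definition prefix (x : nat -> nat) (n : nat) : list nat := map x (seq 0 n).

Definition gen_out (G : generator) (x : nat -> nat) (k : nat) : nat :=
  G (prefix x (S k)).

Definition valid_generator (G : generator) : Prop :=
  forall z : nat -> nat, (forall s t, z s = z t -> s = t) ->
    forall k : nat,
      ~ In (gen_out G z k) (prefix z (S k)) /\
      (forall j : nat, (j < k)%nat -> gen_out G z j <> gen_out G z k).

Definition generates_in_limit (G : generator) (x : nat -> nat) (K : nat -> Prop) : Prop :=
  exists N : nat, forall k : nat, (N <= k)%nat -> K (gen_out G x k).

Definition element_density (G : generator) (x : nat -> nat) (K : nat -> Prop) : Rbar :=
  mu_up (fun y => exists k : nat, gen_out G x k = y) K.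

(* Main.v *)
Require Import Defs.
From Stdlib Require Import Reals List Arith Lia Lra ClassicalDescription ClassicalEpsilon.
From Coquelicot Require Import Coquelicot.
Import ListNotations.
Require Import Defs.
Open Scope R_scope.

Definition sumf (f : nat -> nat) (n : nat) : nat := list_sum (map f (seq 0 n)).

Lemma sumf_S f n : sumf f (S n) = (sumf f n + f n)%nat.
Proof. unfold sumf. rewrite seq_S, map_app, list_sum_app. simpl. lia. Qed.

Lemma sumf_0 f : sumf f 0 = 0%nat.
Proof. reflexivity. Qed.

Lemma sumf_le f g n : (forall t, (f t <= g t)%nat) -> (sumf f n <= sumf g n)%nat.
Proof. intros H; induction n; [rewrite ?sumf_0; unfold sumf; simpl; lia|]. rewrite !sumf_S. specialize (H n). lia. Qed.

Lemma sumf_add f g n : sumf (fun t => f t + g t)%nat n = (sumf f n + sumf g n)%nat.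
Proof. induction n; [reflexivity|]. rewrite !sumf_S. lia. Qed.

Lemma sumf_mono f a b : (a <= b)%nat -> (sumf f a <= sumf f b)%nat.
Proof. intros H; induction H; [lia|]. rewrite sumf_S; lia. Qed.

Lemma ind_T (P : Prop) : P -> ind P = 1%nat.
Proof. intros; unfold ind; destruct (ClassicalDescription.excluded_middle_informative P); [reflexivity|contradiction]. Qed.
Lemma ind_F (P : Prop) : ~ P -> ind P = 0%nat.
Proof. intros; unfold ind; destruct (ClassicalDescription.excluded_middle_informative P); [contradiction|reflexivity]. Qed.
Lemma ind_le1 (P : Prop) : (ind P <= 1)%nat.
Proof. unfold ind; destruct (ClassicalDescription.excluded_middle_informative P); lia. Qed.
Lemma ind_imp (P Q : Prop) : (P -> Q) -> (ind P <= ind Q)%nat.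
Proof. intros H; unfold ind; destruct (ClassicalDescription.excluded_middle_informative P); destruct (ClassicalDescription.excluded_middle_informative Q); try lia; tauto. Qed.

Definition count (P : nat -> Prop) n := sumf (fun t => ind (P t)) n.

Lemma count_S P n : count P (S n) = (count P n + ind (P n))%nat.
Proof. apply sumf_S. Qed.

Lemma count_le_n P n : (count P n <= n)%nat.
Proof. induction n; [unfold count, sumf; simpl; lia|]. rewrite count_S. pose proof (ind_le1 (P n)). lia. Qed.

Lemma count_mono P a b : (a <= b)%nat -> (count P a <= count P b)%nat.
Proof. apply sumf_mono. Qed.

Lemma count_imp (P Q : nat -> Prop) n : (forall t, P t -> Q t) -> (count P n <= count Q n)%nat.
Proof. intros H; apply sumf_le; intros; apply ind_imp; auto. Qed.

Lemma count_inj P y y' : P y -> P y' -> count P y = count P y' -> y = y'.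
Proof.
  intros Hy Hy' E.
  destruct (Nat.lt_trichotomy y y') as [h|[h|h]]; auto; exfalso.
  - pose proof (count_mono P (S y) y' h). rewrite count_S, ind_T in H; auto. lia.
  - pose proof (count_mono P (S y') y h). rewrite count_S, ind_T in H; auto. lia.
Qed.

Lemma disc_ivt (f : nat -> nat) i m : f 0%nat = 0%nat -> (forall n, (f (S n) <= S (f n))%nat) ->
  (i < f m)%nat -> exists y, f y = i /\ f (S y) = S i.
Proof.
  intros H0 HS. induction m; intros Hm. lia.
  destruct (Nat.lt_ge_cases i (f m)). auto.
  exists m. specialize (HS m). lia.
Qed.

Lemma count_unbounded P : (forall N, exists m, (N <= m)%nat /\ P m) ->
  forall k, exists m, (k < count P m)%nat.
Proof.
  intros HP k; induction k.
  - destruct (HP 0%nat) as [m [_ Hm]]. exists (S m). rewrite count_S, ind_T; auto; lia.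
  - destruct IHk as [m Hm]. destruct (HP m) as [y [Hy1 Hy2]]. exists (S y).
    rewrite count_S, ind_T; auto. pose proof (count_mono P m y Hy1). lia.
Qed.

Lemma count_surj P : (forall N, exists m, (N <= m)%nat /\ P m) ->
  forall i, exists y, P y /\ count P y = i.
Proof.
  intros HP i. destruct (count_unbounded P HP i) as [m Hm].
  destruct (disc_ivt (count P) i m) as [y [H1 H2]]; auto.
  - intros n; rewrite count_S; pose proof (ind_le1 (P n)); lia.
  - exists y; split; auto. rewrite count_S in H2. unfold ind in H2.
    destruct (ClassicalDescription.excluded_middle_informative _); auto; lia.
Qed.

Lemma floor_ex (M : R) (HM : 1 <= M) (y : nat) :
  exists g : nat, M * INR g <= INR y < M * INR (S g).
Proof.
  induction y.
  - exists 0%nat. simpl. lra.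
  - destruct IHy as [g [H1 H2]].
    destruct (Rlt_le_dec (INR (S y)) (M * INR (S g))).
    + exists g. split; auto. rewrite S_INR. lra.
    + exists (S g). split; auto. rewrite !S_INR in *. nra.
Qed.

Lemma MINR_lt M a b : 0 < M -> M * INR a < M * INR b -> (a < b)%nat.
Proof. intros H1 H2. apply INR_lt. apply Rmult_lt_reg_l with M; auto. Qed.

Lemma fl_0 M fl : 1 <= M -> (forall y, M * INR (fl y) <= INR y < M * INR (S (fl y))) -> fl 0%nat = 0%nat.
Proof. intros HM Hfl. destruct (Hfl 0%nat) as [H1 H2].
  assert (fl 0%nat < 1)%nat; [|lia]. apply (MINR_lt M); [lra|]. simpl in *. lra. Qed.

Lemma fl_mono M fl : 1 <= M -> (forall y, M * INR (fl y) <= INR y < M * INR (S (fl y))) ->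
  forall y, (fl y <= fl (S y) <= S (fl y))%nat.
Proof. intros HM Hfl y. destruct (Hfl y) as [H1 H2]. destruct (Hfl (S y)) as [H3 H4].
  split.
  - assert (fl y < S (fl (S y)))%nat; [|lia]. apply (MINR_lt M); [lra|].
    pose proof (S_INR y). lra.
  - assert (fl (S y) < S (S (fl y)))%nat; [|lia]. apply (MINR_lt M); [lra|].
    rewrite !S_INR in *. nra.
Qed.

Definition L2f (fl : nat -> nat) (y : nat) : Prop := (1 <= y)%nat /\ fl (S y) <> fl y.

Lemma count_L2_le M fl : 1 <= M -> (forall y, M * INR (fl y) <= INR y < M * INR (S (fl y))) ->
  forall n, (count (L2f fl) n <= fl n)%nat.
Proof. intros HM Hfl n. induction n.
  - unfold count, sumf; simpl; lia.
  - rewrite count_S. pose proof (fl_mono M fl HM Hfl n). unfold ind.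
    destruct (ClassicalDescription.excluded_middle_informative (L2f fl n)) as [[_ h]|h]; lia.
Qed.

Lemma count_L2_ge M fl : 1 <= M -> (forall y, M * INR (fl y) <= INR y < M * INR (S (fl y))) ->
  forall n, (fl (S n) <= count (L2f fl) (S n) + fl 1%nat)%nat.
Proof. intros HM Hfl n. induction n.
  - lia.
  - rewrite count_S. pose proof (fl_mono M fl HM Hfl (S n)). unfold ind.
    destruct (ClassicalDescription.excluded_middle_informative (L2f fl (S n))) as [h|h].
    + lia.
    + assert (fl (S (S n)) = fl (S n)); [|lia].
      destruct (Nat.eq_dec (fl (S (S n))) (fl (S n))); auto. exfalso; apply h; split; auto; lia.
Qed.

Lemma L2_inf M fl : 1 <= M -> (forall y, M * INR (fl y) <= INR y < M * INR (S (fl y))) ->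
  forall N, exists m, (N <= m)%nat /\ L2f fl m.
Proof. intros HM Hfl N.
  apply NNPP; intros Hno.
  assert (Hc : forall k, fl (S N + k)%nat = fl (S N)).
  { induction k. now rewrite Nat.add_0_r.
    rewrite <- IHk. replace (S N + S k)%nat with (S (S N + k))%nat by lia.
    destruct (Nat.eq_dec (fl (S (S N + k)%nat)) (fl (S N + k)%nat)); auto.
    exfalso; apply Hno. exists (S N + k)%nat; split; [lia|]; split; auto; lia. }
  destruct (INR_unbounded (M * INR (S (fl (S N))))) as [k Hk].
  destruct (Hfl (S N + k)%nat) as [_ H2]. rewrite Hc in H2. rewrite plus_INR in H2.
  pose proof (pos_INR (S N)). lra.
Qed.

Lemma main_disp M fl : 1 <= M -> (forall y, M * INR (fl y) <= INR y < M * INR (S (fl y))) ->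
  forall a i, L2f fl a -> count (L2f fl) a = i -> INR (S a) <= M * INR (S (S i)).
Proof.
  intros HM Hfl a i [Ha1 Ha2] Hc.
  destruct a as [|a']; [lia|].
  pose proof (count_L2_ge M fl HM Hfl a') as Hge. rewrite Hc in Hge.
  pose proof (fl_mono M fl HM Hfl 0%nat) as H01. rewrite (fl_0 M fl HM Hfl) in H01.
  destruct (Hfl (S a')) as [_ H2].
  destruct (Nat.eq_dec (fl 1%nat) 0%nat) as [E|E].
  - assert (Hle : (S (fl (S a')) <= S i)%nat) by lia.
    apply le_INR in Hle.
    assert (M * INR (S (fl (S a'))) <= M * INR (S i)) by (apply Rmult_le_compat_l; lra).
    rewrite (S_INR (S a')). rewrite (S_INR (S i)). nra.
  - assert (E1 : fl 1%nat = 1%nat) by lia.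
    destruct (Hfl 1%nat) as [H3 _]. rewrite E1 in H3. simpl in H3.
    assert (M = 1) by lra. subst M.
    rewrite !Rmult_1_l in *. apply INR_lt in H2. apply le_INR. lia.
Qed.

Definition Sqr (t : nat) : Prop := exists c, t = (c * c)%nat.

Lemma sq_count : forall n k, (k < count Sqr n)%nat <-> (k * k < n)%nat.
Proof.
  induction n; intros k.
  - unfold count, sumf; simpl; lia.
  - rewrite count_S. unfold ind.
    destruct (ClassicalDescription.excluded_middle_informative (Sqr n)) as [[j Hj]|h].
    + assert (Cj : count Sqr n = j).
      { destruct (Nat.lt_trichotomy (count Sqr n) j) as [h|[h|h]]; auto.
        - exfalso. pose proof (proj2 (IHn (count Sqr n))). assert (count Sqr n * count Sqr n < n)%nat by (subst; nia). specialize (H H0). lia.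
        - exfalso. pose proof (proj1 (IHn j) h). lia. }
      rewrite Cj. subst n. split; intros; nia.
    + rewrite Nat.add_0_r, IHn. split; intros; try lia.
      destruct (Nat.eq_dec (k*k) n); [|lia]. exfalso; apply h; exists k; auto.
Qed.

Lemma sq_bound K n : (K * count Sqr n <= K * K + n)%nat.
Proof.
  destruct (count Sqr n) as [|d] eqn:E; [lia|].
  assert (d < count Sqr n)%nat by lia. apply sq_count in H.
  assert (H0 : (0 <= (2 * Z.of_nat K - Z.of_nat d - 1) * (2 * Z.of_nat K - Z.of_nat d - 1))%Z) by (apply Z.square_nonneg).
  assert (H1 : (0 <= (Z.of_nat d - 1) * (Z.of_nat d - 1))%Z) by (apply Z.square_nonneg).
  nia.
Qed.

Lemma count_zero (P : nat -> Prop) n : (forall t, ~ P t) -> count P n = 0%nat.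
Proof. intros H; induction n; [reflexivity|]. rewrite count_S, IHn, ind_F; auto. Qed.

Lemma count_True n : count (fun _ => True) n = n.
Proof. induction n; [reflexivity|]. rewrite count_S, IHn, ind_T; auto; lia. Qed.

Lemma count_lt B n : (count (fun t => t < B)%nat n <= B)%nat.
Proof. induction n; [unfold count, sumf; simpl; lia|]. rewrite count_S. unfold ind.
  destruct (ClassicalDescription.excluded_middle_informative (n < B)%nat); try lia.
  pose proof (count_le_n (fun t => t < B)%nat n). lia. Qed.

Lemma count_S0 (P : nat -> Prop) n : ~ P 0%nat -> (count P (S n) <= n)%nat.
Proof. intros H. induction n. { rewrite count_S, ind_F by auto. unfold count, sumf; simpl; lia. }
  rewrite count_S. pose proof (ind_le1 (P (S n))). lia. Qed.

Definition SpecP (P : nat -> Prop) (t : nat) : Prop := exists c, t = (c * c)%nat /\ ~ P c.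

Definition xf (P : nat -> Prop) (nu : nat -> nat) (t : nat) : nat :=
  match ClassicalDescription.excluded_middle_informative (SpecP P t) with
  | left h => proj1_sig (constructive_indefinite_description _ h)
  | right _ => nu (count (fun s => ~ SpecP P s) t)
  end.

Lemma xf_spec P nu t : SpecP P t -> t = (xf P nu t * xf P nu t)%nat /\ ~ P (xf P nu t).
Proof. intros h. unfold xf. destruct (ClassicalDescription.excluded_middle_informative (SpecP P t)); [|contradiction].
  exact (proj2_sig (constructive_indefinite_description _ s)). Qed.

Lemma xf_ns P nu t : ~ SpecP P t -> xf P nu t = nu (count (fun s => ~ SpecP P s) t).
Proof. intros h. unfold xf. destruct (ClassicalDescription.excluded_middle_informative (SpecP P t)); [contradiction|reflexivity]. Qed.

Lemma sq_inj a b : (a * a = b * b)%nat -> a = b.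
Proof. intros H. destruct (Nat.lt_trichotomy a b) as [h|[h|h]]; auto; exfalso; nia. Qed.

Lemma NS_inf P : forall N, exists m, (N <= m)%nat /\ ~ SpecP P m.
Proof. intros N. exists (S N * S N + 1)%nat. split; [nia|].
  intros [c [Hc _]]. destruct (le_lt_dec c (S N)); nia. Qed.

Lemma sigma_True y : sigma y (fun _ => True) = S y.
Proof. unfold sigma. destruct (ClassicalDescription.excluded_middle_informative True); [|tauto].
  change (count (fun _ => True) (S y) = S y). apply count_True. Qed.

Lemma sigma_le y L : (sigma y L <= S y)%nat.
Proof. unfold sigma. destruct (ClassicalDescription.excluded_middle_informative (L y)); [|lia].
  change (count L (S y) <= S y)%nat. apply count_le_n. Qed.

Lemma rank_True y : rank (fun _ => True) y = S y.
Proof. change (count (fun _ => True) (S y) = S y). apply count_True. Qed.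

Lemma bound_ex (f : nat -> nat) N : exists B, forall k, (k < N)%nat -> (f k < B)%nat.
Proof. induction N. exists 0%nat; lia. destruct IHN as [B HB]. exists (S (Nat.max B (f N))).
  intros k Hk. destruct (Nat.eq_dec k N). subst; lia. specialize (HB k ltac:(lia)). lia. Qed.

Theorem theorem7p12 (M : R) (HM : 1 <= M) :
  exists L1 L2 : nat -> Prop,
    language L1 /\ language L2 /\ L1 <> L2 /\
    exists x : nat -> nat,
      (forall K : nat -> Prop, (K = L1 \/ K = L2) ->
         bounded_displacement M x K /\ noisy_enumeration x K) /\
      (forall G : generator, valid_generator G ->
         generates_in_limit G x L1 -> generates_in_limit G x L2 ->
         Rbar_le (element_density G x L1) (Finite (1 / M)) \/
         Rbar_le (element_density G x L2) (Finite (1 / M))).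
Proof.
  pose (fl := fun y => proj1_sig (constructive_indefinite_description _ (floor_ex M HM y))).
  assert (Hfl : forall y, M * INR (fl y) <= INR y < M * INR (S (fl y))).
  { intro y. exact (proj2_sig (constructive_indefinite_description _ (floor_ex M HM y))). }
  clearbody fl.
  pose (L2 := L2f fl).
  assert (Hinf : forall N, exists m, (N <= m)%nat /\ L2 m) by exact (L2_inf M fl HM Hfl).
  pose (nu := fun i => proj1_sig (constructive_indefinite_description _ (count_surj L2 Hinf i))).
  assert (Hnu : forall i, L2 (nu i) /\ count L2 (nu i) = i).
  { intro i. exact (proj2_sig (constructive_indefinite_description _ (count_surj L2 Hinf i))). }
  clearbody nu.
  pose (NS := fun s => ~ SpecP L2 s).
  pose (x := xf L2 nu).
  assert (Hinj : forall s t, x s = x t -> s = t).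
  { intros s t E. unfold x in E.
    destruct (classic (SpecP L2 s)) as [hs|hs]; destruct (classic (SpecP L2 t)) as [ht|ht].
    - destruct (xf_spec L2 nu s hs) as [E1 _]. destruct (xf_spec L2 nu t ht) as [E2 _]. rewrite E1, E2, E. reflexivity.
    - exfalso. destruct (xf_spec L2 nu s hs) as [_ N1]. rewrite E, (xf_ns L2 nu t ht) in N1. apply N1; apply Hnu.
    - exfalso. destruct (xf_spec L2 nu t ht) as [_ N1]. rewrite <- E, (xf_ns L2 nu s hs) in N1. apply N1; apply Hnu.
    - rewrite (xf_ns L2 nu s hs), (xf_ns L2 nu t ht) in E.
      assert (count NS s = count NS t).
      { rewrite <- (proj2 (Hnu (count NS s))), <- (proj2 (Hnu (count NS t))). unfold NS. rewrite E. reflexivity. }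
      apply (count_inj NS); auto. }
  assert (Hcov : forall y, exists t, x t = y).
  { intro y. destruct (classic (L2 y)) as [hy|hy].
    - destruct (count_surj NS (NS_inf L2) (count L2 y)) as [t [Ht1 Ht2]].
      exists t. unfold x. rewrite (xf_ns L2 nu t Ht1). fold NS. rewrite Ht2.
      apply (count_inj L2); [apply Hnu | exact hy | apply Hnu].
    - exists (y * y)%nat. assert (hs : SpecP L2 (y*y)) by (exists y; auto).
      destruct (xf_spec L2 nu _ hs) as [E _]. unfold x. symmetry. apply sq_inj. exact E. }
  assert (Hdisp : forall t, INR (S (x t)) <= M * INR (S t)).
  { intro t. unfold x. destruct (classic (SpecP L2 t)) as [ht|ht].
    - destruct (xf_spec L2 nu t ht) as [E _]. set (c := xf L2 nu t) in *.
      assert (Hc : (S c <= S t)%nat) by nia. apply le_INR in Hc. pose proof (pos_INR (S t)). nra.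
    - rewrite (xf_ns L2 nu t ht). fold NS. set (i := count NS t).
      destruct (Hnu i) as [Ha Hc].
      pose proof (main_disp M fl HM Hfl (nu i) i Ha Hc).
      assert (HNS0 : ~ NS 0%nat). { unfold NS. intro h; apply h. exists 0%nat. split; auto. intros [h1 _]; lia. }
      destruct t as [|t']. { exfalso. apply HNS0. exact ht. }
      pose proof (count_S0 NS t' HNS0). fold i in H0.
      assert (Hle : (S (S i) <= S (S t'))%nat) by lia. apply le_INR in Hle.
      assert (M * INR (S (S i)) <= M * INR (S (S t'))) by (apply Rmult_le_compat_l; lra). lra. }
  exists (fun _ => True), L2.
  split. { intros N. exists N. split; auto. }
  split. { exact Hinf. }
  split. { intro E. assert (h : L2 0%nat) by (rewrite <- E; exact I). destruct h; lia. }
  exists x. split.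
  - intros K [-> | ->]; split.
    + exists 0%nat. intros n _ Hn. rewrite sigma_True. destruct n as [|n]; [lia|].
      replace (S n - 1)%nat with n by lia. apply Hdisp.
    + split; [exact Hinj|]. split; [intros y _; apply Hcov|].
      apply is_lim_seq_ext with (fun _ => 0); [|apply is_lim_seq_const].
      intro n. change (0 = INR (count (fun t => ~ True) n) / INR n).
      rewrite count_zero by tauto. simpl. unfold Rdiv. ring.
    + exists 0%nat. intros n _ Hn. destruct n as [|n]; [lia|].
      replace (S n - 1)%nat with n by lia.
      pose proof (sigma_le (x n) L2) as H. apply le_INR in H. pose proof (Hdisp n). lra.
    + split; [exact Hinj|]. split; [intros y _; apply Hcov|].
      apply is_lim_seq_spec. intro eps.
      assert (epspos : 0 < eps) by apply cond_pos.
      destruct (INR_unbounded (2/eps)) as [K HK].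
      assert (H2e : 2/eps > 0) by (apply Rdiv_lt_0_compat; lra).
      assert (HK0 : (0 < K)%nat) by (apply INR_lt; simpl; lra).
      exists (K*K)%nat. intros n Hn.
      assert (Hc : (noise_count x L2 n <= count Sqr n)%nat).
      { change (count (fun t => ~ L2 (x t)) n <= count Sqr n)%nat. apply count_imp.
        intros t Ht. destruct (classic (SpecP L2 t)) as [h|h].
        - destruct h as [c [Hc _]]; exists c; auto.
        - exfalso; apply Ht; unfold x; rewrite xf_ns by auto; apply Hnu. }
      pose proof (sq_bound K n).
      assert (Hnat : (noise_count x L2 n * K <= 2 * n)%nat) by nia.
      apply le_INR in Hnat. rewrite !mult_INR in Hnat. simpl (INR 2) in Hnat.
      assert (Hn0 : INR n > 0) by (apply lt_0_INR; nia).
      assert (Hke : 2 < INR K * eps) by (apply Rlt_div_l; lra).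
      set (a := INR (noise_count x L2 n)) in *.
      assert (Ha : 0 <= a) by apply pos_INR.
      rewrite Rminus_0_r, Rabs_pos_eq.
      * apply Rlt_div_l; [lra|]. apply Rmult_lt_reg_r with (INR K); [lra|]. nra.
      * unfold Rdiv. apply Rmult_le_pos; [lra|]. left; apply Rinv_0_lt_compat; lra.
  - intros Gen _ _ [N HN]. left. unfold element_density, mu_up.
    destruct (bound_ex (gen_out Gen x) N) as [B HB].
    assert (HW : forall y, (exists k, gen_out Gen x k = y) -> L2 y \/ (y < B)%nat).
    { intros y [k Hk]. destruct (le_lt_dec N k). left; rewrite <- Hk; apply HN; auto. right; rewrite <- Hk; auto. }
    assert (Hic : forall n, (inter_count (fun y => exists k, gen_out Gen x k = y) (fun _ => True) n <= fl n + B)%nat).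
    { intro n. unfold inter_count. rewrite <- seq_shift, map_map.
      change (sumf (fun t => ind (exists y, True /\ rank (fun _ => True) y = S t /\ (exists k, gen_out Gen x k = y))) n <= fl n + B)%nat.
      eapply Nat.le_trans. apply sumf_le with (g := fun t => (ind (L2 t) + ind (t < B)%nat)%nat).
      { intro t. unfold ind at 1. destruct (ClassicalDescription.excluded_middle_informative _) as [[y [_ [Hr Hy]]]|_]; [|lia].
        rewrite rank_True in Hr. injection Hr as ->.
        destruct (HW t Hy) as [h|h]; [rewrite (ind_T (L2 t)) by auto | rewrite (ind_T (t<B)%nat) by auto]; lia. }
      rewrite sumf_add. change (count L2 n + count (fun t => t < B)%nat n <= fl n + B)%nat.
      pose proof (count_L2_le M fl HM Hfl n). pose proof (count_lt B n). unfold L2 in *. lia. }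
    apply Rbar_le_trans with (LimSup_seq (fun n => 1/M + INR B * / INR n)).
    { apply LimSup_le. exists 1%nat. intros n Hn.
      pose proof (Hic n) as H. apply le_INR in H. rewrite plus_INR in H.
      destruct (Hfl n) as [Hf _].
      assert (Hn0 : INR n > 0) by (apply lt_0_INR; lia).
      apply Rle_div_l; auto.
      replace ((1/M + INR B * / INR n) * INR n) with (INR n / M + INR B) by (field; lra).
      assert (INR (fl n) <= INR n / M) by (apply Rle_div_r; lra). lra. }
    assert (Hl : is_lim_seq (fun n => 1/M + INR B * / INR n) (1/M)).
    { pose proof (is_lim_seq_inv INR p_infty is_lim_seq_INR ltac:(discriminate)) as H1. simpl in H1.
      pose proof (is_lim_seq_scal_l _ (INR B) _ H1) as H2. simpl in H2.
      pose proof (is_lim_seq_plus' _ _ _ _ (is_lim_seq_const (1/M)) H2) as H3.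
      rewrite Rmult_0_r, Rplus_0_r in H3. exact H3. }
    rewrite (is_LimSup_seq_unique _ _ (is_lim_LimSup_seq _ _ Hl)). apply Rbar_le_refl.
Qed.
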